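(* Let $T$ be a decomposition tree of a distance-hereditary graph $G$, and let $v$ be an internal node of $T$ with left child $v_l$ and right child $v_r$. If $v$ is labeled $\odot$, then $\hat\gamma_p(v)=\hat\gamma_p(v_l)+\hat\gamma_p(v_r)$; otherwise (i.e. $v$ is labeled $\otimes$ or $\oplus$), $\hat\gamma_p(v)=\hat\gamma_0(v)+2\cdot\hat{mty}_{pr}(v)$.
   Context: All graphs are finite, simple, undirected. For a graph $H$ and $S\subseteq V(H)$, $N_H[S]$ is $S$ together with all vertices adjacent to a vertex of $S$, and $H[S]$ is the induced subgraph. Graphs carry a ''twin set'': a single-vertex graph on $x$ has twin set $\{x\}$. For vertex-disjoint graphs $G_l,G_r$ with twin sets $TS(G_l),TS(G_r)$: the true twin operation $G_l\otimes G_r$ has vertex set $V(G_l)\cup V(G_r)$, edge set $E(G_l)\cup E(G_r)\cup\{uw: u\in TS(G_l), w\in TS(G_r)\}$ and twin set $TS(G_l)\cup TS(G_r)$; the false twin operation $G_l\odot G_r$ has vertex set $V(G_l)\cup V(G_r)$, edge set $E(G_l)\cup E(G_r)$ and twin set $TS(G_l)\cup TS(G_r)$; the attachment operation $G_l\oplus G_r$ has the same vertex and edge sets as $G_l\otimes G_r$ and twin set $TS(G_l)$. A decomposition tree $T$ of $G$ is a rooted binary tree whose leaves are in bijection with $V(G)$, each internal node having a left and a right child and a label in $\{\otimes,\odot,\oplus\}$; for each node $v$ define $\hat G(v)$ and $\hat{TS}(v)$ recursively: for a leaf $x$, the single-vertex graph on $x$ with twin set $\{x\}$; for an internal node $v$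 with label $\circ$ and children $v_l,v_r$, $\hat G(v)=\hat G(v_l)\circ\hat G(v_r)$ with the corresponding twin set; and one requires $\hat G(\text{root})=G$. Then $\hat G(v)$ is the subgraph of $G$ induced by the set $\hat V(v)$ of leaves below $v$. (A graph is distance-hereditary iff it has a decomposition tree.) For a node $v$ and $0\le k\le|\hat{TS}(v)|$, call $S\subseteq\hat V(v)$ $k$-feasible if $\hat V(v)\setminus\hat{TS}(v)\subseteq N_{\hat G(v)}[S]$ and there is $X\subseteq S\cap\hat{TS}(v)$ with $|X|=k$ such that $\hat G(v)[S\setminus X]$ has a perfect matching. $\hat\gamma_k(v)$ is the minimum size of a $k$-feasible set and $\hat D_k(v)$ the family of $k$-feasible sets of that size. A paired-dominating set of a graph $H$ is a dominating set $D$ of $H$ such that $H[D]$ has a perfect matching; $\gamma_p(H)$ is the minimum size of a paired-dominating set of $H$ ($\infty$ if none exists). Set $\hat\gamma_p(v)=\gamma_p(\hat G(v))$, and let $\hat D_p(v)$ be the family of paired-dominating sets of $\hat G(v)$ of size $\hat\gamma_p(v)$. Define $\hat{mty}_{pr}(v)=1$ if $\hat D_p(v)\cap\hat D_0(v)=\emptyset$ and $\hat{mty}_{pr}(v)=0$ otherwise. *)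

(* Defs.v *)
From mathcomp Require Import all_boot.
Set Implicit Arguments. Unset Strict Implicit. Unset Printing Implicit Defensive.

(* Labels of internal nodes: true twin (otimes), false twin (odot), attachment (oplus). *)
Inductive lab := Otimes | Odot | Oplus.

Inductive dtree (V : Type) :=
| Leaf of V
| Node of lab & dtree V & dtree V.
Arguments Leaf {V}. Arguments Node {V}.

Section DH.
Variable V : finType.

Fixpoint leaves (t : dtree V) : seq V :=
  match t with Leaf x => [:: x] | Node _ l r => leaves l ++ leaves r end.

Fixpoint hatV (t : dtree V) : {set V} :=
  match t with Leaf x => [set x] | Node _ l r => hatV l :|: hatV r end.

Fixpoint hatTS (t : dtree V) : {set V} :=
  match t with
  | Leaf x => [set x]
  | Node Oplus l _ => hatTS l
  | Node _ l r => hatTS l :|: hatTS r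
  end.

(* edge relation of \hat G(v) (its vertex set is hatV v) *)
Fixpoint hatE (t : dtree V) : rel V :=
  match t with
  | Leaf _ => fun _ _ => false
  | Node Odot l r => fun u w => hatE l u w || hatE r u w
  | Node _ l r => fun u w =>
      [|| hatE l u w, hatE r u w,
          (u \in hatTS l) && (w \in hatTS r) | (u \in hatTS r) && (w \in hatTS l)]
  end.

Fixpoint subtree (s t : dtree V) : Prop :=
  s = t \/ match t with Leaf _ => False | Node _ l r => subtree s l \/ subtree s r end.

Definition decomp_tree (e : rel V) (T : dtree V) : Prop :=
  uniq (leaves T) /\ (forall x, x \in leaves T) /\ (forall u w, hatE T u w = e u w).

Definition cnbhd (E : rel V) (S : {set V}) : {set V} :=
  [set x | (x \in S) || [exists y in S, E x y]].

Definition has_pm (E : rel V) (D : {set V}) : bool :=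
  [exists M : {set {set V}},
     [forall A in M, exists x, exists y,
        [&& A == [set x; y], x != y, E x y, x \in D & y \in D]] &&
     [forall x in D, #|[set A in M | x \in A]| == 1]].

(* minimum size of a set satisfying P; None stands for infinity *)
Definition omin (P : pred {set V}) : option nat :=
  if [exists S, P S] then Some (\big[minn/#|V|]_(S | P S) #|S|) else None.

Definition pds (t : dtree V) : pred {set V} := fun D =>
  [&& D \subset hatV t, hatV t \subset cnbhd (hatE t) D & has_pm (hatE t) D].

Definition kfeas (k : nat) (t : dtree V) : pred {set V} := fun S =>
  [&& S \subset hatV t, hatV t :\: hatTS t \subset cnbhd (hatE t) S &
      [exists X : {set V}, [&& X \subset S :&: hatTS t, #|X| == k &
                               has_pm (hatE t) (S :\: X)]]].

Definition gamma_p (t : dtree V) : option nat := omin (pds t).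
Definition gamma_k (k : nat) (t : dtree V) : option nat := omin (kfeas k t).

Definition Dp (t : dtree V) : pred {set V} := fun S =>
  pds t S && (gamma_p t == Some #|S|).
Definition Dk (k : nat) (t : dtree V) : pred {set V} := fun S =>
  kfeas k t S && (gamma_k k t == Some #|S|).

Definition mty_pr (t : dtree V) : nat :=
  if [exists S, Dp t S && Dk 0 t S] then 0 else 1.

End DH.

Definition oadd (a b : option nat) : option nat :=
  match a, b with Some x, Some y => Some (x + y) | _, _ => None end.

(* Main.v *)
Require Import Defs.
From mathcomp Require Import all_boot zify.
Set Implicit Arguments. Unset Strict Implicit. Unset Printing Implicit Defensive.

Section Aux.
Variable V : finType.
Implicit Types (t l r : dtree V) (E : rel V) (D S : {set V}).

Lemma hatV_leaves t : hatV t = [set x | x \in leaves t].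
Proof.
elim: t => [x|o l IHl r IHr] /=; apply/setP => y; rewrite !inE //.
by rewrite IHl IHr !inE mem_cat.
Qed.

Lemma hatTS_sub t : hatTS t \subset hatV t.
Proof.
elim: t => [x|o l IHl r IHr] //=.
case: o; rewrite ?setUSS //; exact: subset_trans IHl (subsetUl _ _).
Qed.

Lemma hatTS_n0 t : exists x, x \in hatTS t.
Proof.
elim: t => [x|o l [a Ha] r IHr] /=; first by exists x; rewrite inE.
by case: o; exists a; rewrite ?inE ?Ha.
Qed.

Lemma hatE_in t u w : hatE t u w -> (u \in hatV t) && (w \in hatV t).
Proof.
elim: t => [x|o l IHl r IHr] //=.
have sl := hatTS_sub l; have sr := hatTS_sub r.
case: o => /=; rewrite !inE.
- case/or4P => [/IHl/andP[-> ->]|/IHr/andP[-> ->]|/andP[a b]|/andP[a b]];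
   rewrite ?inE ?orbT //.
  + by rewrite (subsetP sl _ a) (subsetP sr _ b) orbT.
  + by rewrite (subsetP sl _ b) (subsetP sr _ a) orbT.
- by case/orP => [/IHl/andP[-> ->]|/IHr/andP[-> ->]]; rewrite ?orbT.
- case/or4P => [/IHl/andP[-> ->]|/IHr/andP[-> ->]|/andP[a b]|/andP[a b]];
   rewrite ?inE ?orbT //.
  + by rewrite (subsetP sl _ a) (subsetP sr _ b) orbT.
  + by rewrite (subsetP sl _ b) (subsetP sr _ a) orbT.
Qed.

Lemma subtree_uniq s t : subtree s t -> uniq (leaves t) -> uniq (leaves s).
Proof.
elim: t => [x|o l IHl r IHr] /=; first by case=> // ->.
case=> [->//|[/IHl H|/IHr H]]; rewrite cat_uniq => /and3P[a b c]; auto.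
Qed.

Lemma node_disj o l r : uniq (leaves (Node o l r)) ->
  forall x, x \in hatV l -> x \in hatV r -> False.
Proof.
rewrite /= cat_uniq => /and3P[_ h _] x.
rewrite !hatV_leaves !inE => a b.
by move/hasP: h; apply; exists x.
Qed.

Lemma ominP (P : pred {set V}) :
  ((forall S, ~~ P S) /\ omin P = None) \/
  exists S, [/\ P S, omin P = Some #|S| & forall S', P S' -> #|S| <= #|S'|].
Proof.
rewrite /omin; case: existsP => [[S0 HS0]|H]; last first.
  by left; split => // S; apply/negP => HS; apply: H; exists S.
right; case: (arg_minnP (fun S : {set V} => #|S|) HS0) => S HS Hmin.
exists S; split => //; congr Some; apply/eqP; rewrite eqn_leq; apply/andP; split.
  have: S \in index_enum _ := mem_index_enum S.
  rewrite unlock /reducebig; elim: (index_enum _) => //= A s IH.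
  rewrite inE => /orP[/eqP<-|/IH h]; first by rewrite HS geq_minl.
  by case: (P A) => //; apply: leq_trans h; rewrite geq_minr.
by apply: (big_ind (fun m => #|S| <= m)) => //; [exact: max_card|move=> a b; rewrite leq_min => ->].
Qed.


Definition pmM E D (M : {set {set V}}) :=
  (forall A, A \in M -> exists x y, [/\ A = [set x; y], x != y, E x y, x \in D & y \in D])
  /\ (forall x, x \in D -> #|[set A in M | x \in A]| = 1).

Lemma pmP E D : has_pm E D <-> exists M, pmM E D M.
Proof.
split.
- case/existsP => M /andP[/forallP h1 /forallP h2]; exists M; split.
  + move=> A HA; move/implyP: (h1 A) => /(_ HA) /existsP[x /existsP[y]].
    by case/and5P => /eqP -> ? ? ? ?; exists x, y.
  + by move=> x Hx; move/implyP: (h2 x) => /(_ Hx) /eqP.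
- case=> M [h1 h2]; apply/existsP; exists M; apply/andP; split.
  + apply/forallP => A; apply/implyP => HA; case: (h1 A HA) => x [y [-> ? ? ? ?]].
    by apply/existsP; exists x; apply/existsP; exists y; rewrite eqxx; apply/and5P.
  + by apply/forallP => x; apply/implyP => Hx; rewrite h2.
Qed.

Lemma pmM_sub E D M A x : pmM E D M -> A \in M -> x \in A -> x \in D.
Proof.
case=> h1 _ HA; case: (h1 A HA) => a [b [-> _ _ Ha Hb]].
by rewrite in_set2 => /orP[]/eqP->.
Qed.

Lemma pm_union E1 E2 E D1 D2 :
  (forall x y, E1 x y -> E x y) -> (forall x y, E2 x y -> E x y) ->
  (forall x, x \in D1 -> x \in D2 -> False) ->
  has_pm E1 D1 -> has_pm E2 D2 -> has_pm E (D1 :|: D2).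
Proof.
move=> HE1 HE2 Hd /pmP[M1 H1] /pmP[M2 H2]; apply/pmP; exists (M1 :|: M2); split.
- move=> A; rewrite inE => /orP[] HA.
  + case: (H1.1 A HA) => a [b [-> ? ? ? ?]]; exists a, b; split; rewrite ?inE ?HE1 //.
    by apply/orP; left. by apply/orP; left.
  + case: (H2.1 A HA) => a [b [-> ? ? ? ?]]; exists a, b; split; rewrite ?inE ?HE2 //.
    by apply/orP; right. by apply/orP; right.
- move=> x; rewrite inE => /orP[] Hx.
  + rewrite -(H1.2 x Hx); congr #|pred_of_set _|; apply/setP => A; rewrite !inE.
    case hA: (A \in M2); rewrite ?orbT ?orbF //=.
    case hxA: (x \in A); rewrite ?andbF ?andbT //.
    by case: (Hd x Hx (pmM_sub H2 hA hxA)).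
  + rewrite -(H2.2 x Hx); congr #|pred_of_set _|; apply/setP => A; rewrite !inE.
    case hA: (A \in M1); rewrite ?orbT ?orbF //=.
    case hxA: (x \in A); rewrite ?andbF ?andbT //.
    by case: (Hd x (pmM_sub H1 hA hxA) Hx).
Qed.

Lemma pm_pair E z y : E z y -> z != y -> has_pm E [set z; y].
Proof.
move=> hE hne; apply/pmP; exists [set [set z; y]]; split.
- by move=> A; rewrite inE => /eqP ->; exists z, y; rewrite !inE !eqxx ?orbT.
- move=> x Hx; rewrite (_ : [set A in _ | _] = [set [set z; y]]) ?cards1 //.
  by apply/setP => A; rewrite !inE; case: eqP => // ->; rewrite Hx.
Qed.

Lemma pm_restrict E E' D (P : {set V}) :
  (forall x y, x \in D -> y \in D -> E x y -> ((x \in P) == (y \in P)) && ((x \in P) ==> E' x y)) ->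
  has_pm E D -> has_pm E' (D :&: P).
Proof.
move=> h /pmP[M [h1 h2]]; apply/pmP; exists [set A in M | A \subset P]; split.
- move=> A; rewrite inE => /andP[HA sAP]; case: (h1 A HA) => a [b [eA ne hab Ha Hb]].
  have aP : a \in P by apply: (subsetP sAP); rewrite eA !inE eqxx.
  have bP : b \in P by apply: (subsetP sAP); rewrite eA !inE eqxx orbT.
  exists a, b; split; rewrite ?inE ?Ha ?Hb ?aP ?bP //.
  by case/andP: (h a b Ha Hb hab) => _; rewrite aP.
- move=> x; rewrite inE => /andP[Hx xP]; rewrite -(h2 x Hx); congr #|pred_of_set _|.
  apply/setP => A; rewrite !inE; case HA: (A \in M) => //=.
  case hxA: (x \in A); rewrite ?andbF //= andbT.
  case: (h1 A HA) => a [b [eA ne hab Ha Hb]].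
  case/andP: (h a b Ha Hb hab) => /eqP hP _.
  apply/subsetP => w; move: hxA xP; rewrite eA !inE => /orP[]/eqP -> xP' /orP[]/eqP ->;
   by rewrite ?xP' // ?hP // -hP.
Qed.

Lemma pm_even E D : has_pm E D -> ~~ odd #|D|.
Proof.
case/pmP => M [h1 h2].
have -> : #|D| = \sum_(A in M) 2.
  rewrite -sum1_card.
  transitivity (\sum_(x in D) \sum_(A in M) (x \in A : nat)).
    apply: eq_bigr => x Hx; rewrite -(h2 x Hx) -sum1_card.
    rewrite big_mkcond /= [RHS]big_mkcond /=; apply: eq_bigr => A _.
    by rewrite inE; case: (A \in M); case: (x \in A).
  rewrite exchange_big /=; apply: eq_bigr => A HA.
  case: (h1 A HA) => a [b [eA ne _ Ha Hb]].
  rewrite (_ : 2 = #|[set a; b]|); last by rewrite cards2 ne.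
  rewrite -sum1_card eA big_mkcond /= [RHS]big_mkcond /=.
  apply: eq_bigr => x _; rewrite !inE.
  case: (x =P a) => [->|_]; rewrite ?Ha //=; case: (x =P b) => [->|_]; rewrite ?Hb //=; by case: (x \in D).
by rewrite big_const_seq iter_addn_0 oddM.
Qed.


Lemma cnbhd_mono E S S' : S \subset S' -> cnbhd E S \subset cnbhd E S'.
Proof.
move=> sS; apply/subsetP => x; rewrite !inE => /orP[/(subsetP sS)->//|/existsP[y /andP[yS Exy]]].
by apply/orP; right; apply/existsP; exists y; rewrite (subsetP sS _ yS).
Qed.

Lemma cnbhd_edge E S x y : y \in S -> E x y -> x \in cnbhd E S.
Proof. by move=> yS Exy; rewrite inE; apply/orP; right; apply/existsP; exists y; rewrite yS. Qed.

Lemma cnbhd_self E S x : x \in S -> x \in cnbhd E S.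
Proof. by rewrite inE => ->. Qed.

Lemma pds_kfeas t S : pds t S -> kfeas 0 t S.
Proof.
case/and3P => h1 h2 h3; apply/and3P; split => //.
  exact: subset_trans (subsetDl _ _) h2.
by apply/existsP; exists set0; rewrite sub0set cards0 setD0 h3.
Qed.

Lemma kfeas0P t S : kfeas 0 t S ->
  [/\ S \subset hatV t, hatV t :\: hatTS t \subset cnbhd (hatE t) S & has_pm (hatE t) S].
Proof.
case/and3P => h1 h2 /existsP[X /and3P[_ /eqP/cards0_eq -> ]]; rewrite setD0 => h3.
by split.
Qed.

Lemma extend t (TS1 TS2 : {set V}) S z b :
  hatTS t \subset TS1 :|: TS2 -> TS1 \subset hatV t -> TS2 \subset hatV t ->
  (forall x, x \in TS1 -> x \in TS2 -> False) ->
  (forall u w, u \in TS1 -> w \in TS2 -> hatE t u w && hatE t w u) ->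
  kfeas 0 t S -> z \in hatV t -> z \notin cnbhd (hatE t) S -> z \in TS1 -> b \in TS2 ->
  pds t ([set z; b] :|: S) /\ #|[set z; b] :|: S| <= #|S| + 2.
Proof.
move=> sTS s1 s2 dis cross /kfeas0P[sS dom pm] zV zN z1 b2.
have zS : z \notin S by apply: contra zN; apply: cnbhd_self.
have bS : b \notin S.
  by apply: contra zN => bS; apply: (cnbhd_edge bS); case/andP: (cross _ _ z1 b2).
have zb : z != b by apply/eqP => e; subst; exact: dis b z1 b2.
split; last first.
  by rewrite cardsU cards2 zb; apply: leq_trans (leq_subr _ _) _; rewrite addnC.
apply/and3P; split.
- rewrite subUset sS andbT; apply/subsetP => x; rewrite !inE => /orP[]/eqP->//.
  exact: (subsetP s2).
- apply/subsetP => x xV.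
  case xN: (x \in cnbhd (hatE t) S).
    by apply: (subsetP (cnbhd_mono _ (subsetUr _ _))).
  have xT : x \in hatTS t.
    apply: contraFT xN => xT; apply: (subsetP dom); by rewrite inE xT xV.
  move: (subsetP sTS x xT); rewrite inE => /orP[x1|x2].
  + apply: (@cnbhd_edge _ _ _ b); first by rewrite !inE eqxx orbT.
    by case/andP: (cross _ _ x1 b2).
  + apply: (@cnbhd_edge _ _ _ z); first by rewrite !inE eqxx.
    by case/andP: (cross _ _ z1 x2).
- apply: (pm_union (E1 := hatE t) (E2 := hatE t)) => //.
    move=> x; rewrite !inE => /orP[]/eqP-> xS; [by move: zS; rewrite xS|by move: bS; rewrite xS].
  by apply: pm_pair => //; case/andP: (cross _ _ z1 b2).
Qed.

Lemma nonodot_main t (TSl TSr : {set V}) :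
  hatTS t \subset TSl :|: TSr -> TSl \subset hatV t -> TSr \subset hatV t ->
  (exists a, a \in TSl) -> (exists b, b \in TSr) ->
  (forall x, x \in TSl -> x \in TSr -> False) ->
  (forall u w, u \in TSl -> w \in TSr -> hatE t u w && hatE t w u) ->
  gamma_p t = oadd (gamma_k 0 t) (Some (2 * mty_pr t)).
Proof.
move=> sTS sl sr [a aL] [b bR] dis cross.
have sTS' : hatTS t \subset TSr :|: TSl by rewrite setUC.
have dis' : forall x, x \in TSr -> x \in TSl -> False by move=> x h1 h2; exact: dis x h2 h1.
have cross' : forall u w, u \in TSr -> w \in TSl -> hatE t u w && hatE t w u.
  by move=> u w h1 h2; rewrite andbC; apply: cross.
have ext : forall S, kfeas 0 t S -> exists S', pds t S' /\ #|S'| <= #|S| + 2.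
  move=> S hS; have [sS dom pm] := kfeas0P hS.
  case hd: (hatV t \subset cnbhd (hatE t) S).
    by exists S; split; [apply/and3P; split|rewrite leq_addr].
  case/subsetPn: (negbT hd) => z zV zN.
  have zT : z \in hatTS t.
    apply: contraNT zN => zT; apply: (subsetP dom); by rewrite inE zT zV.
  move: (subsetP sTS z zT); rewrite inE => /orP[z1|z2].
  + by exists ([set z; b] :|: S); apply: (extend sTS sl sr dis cross).
  + by exists ([set z; a] :|: S); apply: (extend sTS' sr sl dis' cross').
rewrite /gamma_p /gamma_k /mty_pr /Dp /Dk /gamma_p /gamma_k.
case: (ominP (kfeas 0 t)) => [[hn ->]|[S0 [h0 -> m0]]].
  case: (ominP (pds t)) => [[_ ->]//|[S [hS _ _]]].
  by move: (hn S); rewrite (pds_kfeas hS).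
case: (ext S0 h0) => S1 [hS1 c1].
case: (ominP (pds t)) => [[hn _]|[S [hS -> mS]]]; first by move: (hn S1); rewrite hS1.
have le1 : #|S0| <= #|S| by apply: m0; apply: pds_kfeas.
have le2 : #|S| <= #|S0| + 2 by apply: leq_trans (mS _ hS1) c1.
case: existsP => [[S2 /andP[/andP[p2 /eqP[e2]] /andP[k2 /eqP[e2']]]]|hno].
  by rewrite /= muln0 addn0 e2 e2'.
rewrite /= muln1; congr Some.
have ne : #|S| != #|S0|.
  apply/eqP => e; apply: hno; exists S; rewrite hS (pds_kfeas hS) e !eqxx.
  by [].
have ev1 : ~~ odd #|S0| by case: (kfeas0P h0) => _ _ /pm_even.
have ev2 : ~~ odd #|S| by case/and3P: hS => _ _ /pm_even.
have : #|S| <> #|S0| + 1.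
  by move=> e; move: ev2; rewrite e addn1 /= ev1.
lia.
Qed.


Lemma cnbhd_monoE (E E' : rel V) S S' : (forall x y, E x y -> E' x y) -> S \subset S' ->
  cnbhd E S \subset cnbhd E' S'.
Proof.
move=> hE sS; apply/subsetP => x; rewrite !inE => /orP[/(subsetP sS)->//|/existsP[y /andP[yS Exy]]].
by apply/orP; right; apply/existsP; exists y; rewrite (subsetP sS _ yS) hE.
Qed.

Lemma split_side (E E1 E2 : rel V) (V1 V2 D : {set V}) :
  (forall x y, E x y = E1 x y || E2 x y) ->
  (forall x y, E1 x y -> (x \in V1) && (y \in V1)) ->
  (forall x y, E2 x y -> (x \in V2) && (y \in V2)) ->
  (forall x, x \in V1 -> x \in V2 -> False) ->
  V1 \subset cnbhd E D -> has_pm E D ->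
  V1 \subset cnbhd E1 (D :&: V1) /\ has_pm E1 (D :&: V1).
Proof.
move=> hE h1 h2 dis dom pm; split.
- apply/subsetP => x xV; move: (subsetP dom x xV); rewrite inE => /orP[xD|].
    by apply: cnbhd_self; rewrite inE xD xV.
  case/existsP => y /andP[yD]; rewrite hE => /orP[e1|e2].
    by apply: (cnbhd_edge (y := y)) => //; rewrite inE yD; case/andP: (h1 _ _ e1).
  by case/andP: (h2 _ _ e2) => x2 _; case: (dis x xV x2).
- apply: (pm_restrict _ pm) => x y _ _; rewrite hE => /orP[e1|e2].
    by case/andP: (h1 _ _ e1) => -> ->; rewrite e1.
  case/andP: (h2 _ _ e2) => x2 y2.
  have -> : (x \in V1) = false by apply/negP => x1; exact: dis x x1 x2.
  have -> : (y \in V1) = false by apply/negP => y1; exact: dis y y1 y2.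
  by [].
Qed.

Lemma odot_main l r : (forall x, x \in hatV l -> x \in hatV r -> False) ->
  gamma_p (Node Odot l r) = oadd (gamma_p l) (gamma_p r).
Proof.
move=> dis.
have dis' : forall x, x \in hatV r -> x \in hatV l -> False by move=> x a b; exact: dis x b a.
have El := @hatE_in l; have Er := @hatE_in r.
have projl : forall D, pds (Node Odot l r) D -> pds l (D :&: hatV l).
  move=> D /and3P[sD dom pm]; have [h1 h2] := split_side (E1 := hatE l) (E2 := hatE r)
     (fun x y => erefl) El Er dis (subset_trans (subsetUl _ _) dom) pm.
  by apply/and3P; split => //; apply: subsetIr.
have projr : forall D, pds (Node Odot l r) D -> pds r (D :&: hatV r).
  move=> D /and3P[sD dom pm]; have [h1 h2] := split_side (E := hatE (Node Odot l r))
     (E1 := hatE r) (E2 := hatE l) (fun x y => orbC _ _) Er El dis' (subset_trans (subsetUr _ _) dom) pm.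
  by apply/and3P; split => //; apply: subsetIr.
have join : forall Dl Dr, pds l Dl -> pds r Dr ->
    pds (Node Odot l r) (Dl :|: Dr) /\ #|Dl :|: Dr| = #|Dl| + #|Dr|.
  move=> Dl Dr /and3P[sl dl pl] /and3P[sr dr pr].
  have dd : forall x, x \in Dl -> x \in Dr -> False.
    by move=> x a b; exact: dis x (subsetP sl _ a) (subsetP sr _ b).
  split.
  + apply/and3P; split; first by apply: setUSS.
    * rewrite /= subUset; apply/andP; split.
        apply: subset_trans dl _; apply: cnbhd_monoE (subsetUl _ _) => x y /= ->.
        by [].
      apply: subset_trans dr _; apply: cnbhd_monoE (subsetUr _ _) => x y /= ->.
      by rewrite orbT.
    * apply: (pm_union (E1 := hatE l) (E2 := hatE r)) => //= x y ->; rewrite ?orbT //.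
  + rewrite cardsU; have -> : Dl :&: Dr = set0.
      by apply/setP => x; rewrite !inE; apply/negP => /andP[a b]; exact: dd x a b.
    by rewrite cards0 subn0.
rewrite /gamma_p.
case: (ominP (pds l)) => [[hn ->]|[Sl [hl -> ml]]].
  case: (ominP (pds (Node Odot l r))) => [[_ ->]//|[S [hS _ _]]].
  by move: (hn (S :&: hatV l)); rewrite projl.
case: (ominP (pds r)) => [[hn ->]|[Sr [hr -> mr]]].
  case: (ominP (pds (Node Odot l r))) => [[_ ->]//|[S [hS _ _]]].
  by move: (hn (S :&: hatV r)); rewrite projr.
have [hj cj] := join _ _ hl hr.
case: (ominP (pds (Node Odot l r))) => [[hn _]|[S [hS -> mS]]]; first by move: (hn (Sl :|: Sr)); rewrite hj.
congr Some; apply/eqP; rewrite eqn_leq; apply/andP; split; first by rewrite -cj mS.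
have [hj' cj'] := join _ _ (projl _ hS) (projr _ hS).
have -> : S = (S :&: hatV l) :|: (S :&: hatV r).
  by rewrite -setIUr; apply/esym/setIidPl; case/and3P: hS.
by rewrite cj' leq_add // ?ml ?mr // ; [exact: projl | exact: projr].
Qed.

End Aux.

Theorem lemma2 (V : finType) (e : rel V)
  (e_sym : symmetric e) (e_irr : irreflexive e)
  (T : dtree V) (hT : decomp_tree e T)
  (o : lab) (vl vr : dtree V) (hv : subtree (Node o vl vr) T) :
  (o = Odot -> gamma_p (Node o vl vr) = oadd (gamma_p vl) (gamma_p vr)) /\
  (o <> Odot -> gamma_p (Node o vl vr) =
                oadd (gamma_k 0 (Node o vl vr)) (Some (2 * mty_pr (Node o vl vr)))).
Proof.
have u := subtree_uniq hv hT.1.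
have dis := node_disj u.
split; first by move=> ->; exact: odot_main.
have dTS : forall x, x \in hatTS vl -> x \in hatTS vr -> False.
  by move=> x a b; exact: dis x (subsetP (hatTS_sub vl) x a) (subsetP (hatTS_sub vr) x b).
have sl : hatTS vl \subset hatV vl :|: hatV vr := subset_trans (hatTS_sub vl) (subsetUl _ _).
have sr : hatTS vr \subset hatV vl :|: hatV vr := subset_trans (hatTS_sub vr) (subsetUr _ _).
move=> ne; case: o ne hv u => // _ _ _.
- apply: (nonodot_main (TSl := hatTS vl) (TSr := hatTS vr)) => //; try exact: hatTS_n0.
  by move=> x y a b /=; rewrite a b !orbT.
- apply: (nonodot_main (TSl := hatTS vl) (TSr := hatTS vr)) => //; try exact: hatTS_n0.
  + exact: subsetUl.
  + by move=> x y a b /=; rewrite a b !orbT.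
Qed.
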